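(* Let $R$ be the ring of integers of a nonarchimedean local field of characteristic not $2$ in which $2$ is a prime element, and let $\ell$ be an even $R$-lattice of rank $n\ge1$. If $J$ is an $R$-lattice such that $Q^\ast(\ell)\cap Q^\ast(J)\ne\varnothing$, then $\ell$ is primitively represented by $\mathbb{H}^{n-1}\perp J$.
   Context: An $R$-lattice is a finitely generated $R$-submodule of a quadratic space $(V,B)$ over $F$ with $Q(v)=B(v,v)$, assumed integral ($B(L,L)\subseteq R$) and nondegenerate; it is even if $Q(L)\subseteq 2R$. $Q^\ast(L)=\{Q(v): v\in L\text{ primitive}\}$, where $v$ is primitive if $Rv$ is a direct summand of $L$. A representation is an $R$-linear map preserving $B$, primitive if its image is a direct summand. $\mathbb{H}$ is the binary lattice with Gram matrix $\begin{pmatrix}0&1\\1&0\end{pmatrix}$ and $\mathbb{H}^{k}$ the orthogonal sum of $k$ copies ($\mathbb{H}^0=0$). *)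

(* Defs.v *)
From mathcomp Require Import all_boot all_order all_algebra.
Set Implicit Arguments. Unset Strict Implicit. Unset Printing Implicit Defensive.
Import Order.TTheory GRing.Theory Num.Theory.
Local Open Scope ring_scope.

Section Defs.
Variable F : fieldType.
Variable v : F -> int.

(* v is a normalized discrete valuation on F (only its values on nonzero
   elements matter; v 0 is irrelevant). *)
Definition is_dvaluation : Prop :=
  [/\ forall x y, x != 0 -> y != 0 -> v (x * y) = v x + v y,
      forall (x y : F) (k : int), x != 0 -> y != 0 -> x + y != 0 ->
        k <= v x -> k <= v y -> k <= v (x + y)
    & exists pi : F, pi != 0 /\ v pi = 1].

Definition vge (k : int) (x : F) : bool := (x == 0) || (k <= v x).

Definition inR (x : F) : bool := vge 0 x.

Definition complete : Prop :=
  forall u : nat -> F,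
    (forall k : int, exists N : nat, forall p q, (N <= p)%N -> (N <= q)%N ->
       vge k (u p - u q)) ->
    exists l : F, forall k : int, exists N : nat, forall p, (N <= p)%N ->
       vge k (u p - l).

Definition finite_residue : Prop :=
  exists s : seq F, all inR s /\
    forall x, inR x -> exists2 y, y \in s & vge 1 (x - y).

Definition local_field : Prop := [/\ is_dvaluation, complete & finite_residue].

Definition prime_elem (p : F) : Prop := p != 0 /\ v p = 1.

Definition mxR (a b : nat) (X : 'M[F]_(a, b)) : Prop := forall i j, inR (X i j).

Definition submodule (m : nat) (N : 'rV[F]_m -> Prop) : Prop :=
  [/\ forall t, N t -> mxR t, N 0,
      forall a b, N a -> N b -> N (a + b)
    & forall r a, inR r -> N a -> N (r *: a)].

Definition direct_summand (m : nat) (S : 'rV[F]_m -> Prop) : Prop :=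
  exists N : 'rV[F]_m -> Prop, [/\ submodule N,
    forall y, mxR y -> exists s t, [/\ S s, N t & y = s + t]
  & forall z, S z -> N z -> z = 0].

(* an R-lattice of rank k, given by its Gram matrix w.r.t. an R-basis:
   symmetric, integral and nondegenerate *)
Definition lattice (k : nat) (G : 'M[F]_k) : Prop :=
  [/\ G^T = G, mxR G & \det G != 0].

Definition Qf (k : nat) (G : 'M[F]_k) (x : 'rV[F]_k) : F := (x *m G *m x^T) 0 0.

Definition even (k : nat) (G : 'M[F]_k) : Prop :=
  forall x : 'rV[F]_k, mxR x -> inR (Qf G x / 2%:R).

Definition primitive_vec (k : nat) (x : 'rV[F]_k) : Prop :=
  [/\ mxR x, x != 0 & direct_summand (fun y => exists2 r, inR r & y = r *: x)].

Definition Qstar (k : nat) (G : 'M[F]_k) (q : F) : Prop :=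
  exists x : 'rV[F]_k, primitive_vec x /\ q = Qf G x.

(* X : R^a -> R^b (row vectors, x |-> x *m X) is a primitive representation of
   the lattice with Gram A by the lattice with Gram C *)
Definition prim_rep (a b : nat) (A : 'M[F]_a) (C : 'M[F]_b) (X : 'M[F]_(a, b)) : Prop :=
  [/\ mxR X, X *m C *m X^T = A
    & direct_summand (fun y => exists2 z : 'rV[F]_a, mxR z & y = z *m X)].

End Defs.

(* Gram matrix of H^k (orthogonal sum of k hyperbolic planes) *)
Definition hyp_gram (F : fieldType) (k : nat) : 'M[F]_(2 * k) :=
  \matrix_(i < 2 * k, j < 2 * k)
     (if (i./2 == j./2)%N && (i != j :> nat) then 1 else 0).

(* Main.v *)
Require Import Defs.
From mathcomp Require Import all_boot all_order all_algebra perm zify.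
Set Implicit Arguments. Unset Strict Implicit. Unset Printing Implicit Defensive.
Import Order.TTheory GRing.Theory Num.Theory.
Local Open Scope ring_scope.

Section Val.
Variables (F : fieldType) (v : F -> int).
Hypothesis hv : is_dvaluation v.

Lemma vM x y : x != 0 -> y != 0 -> v (x * y) = v x + v y.
Proof. by move: hv => [H _ _]; apply: H. Qed.

Lemma v1 : v 1 = 0.
Proof.
have := vM (oner_neq0 F) (oner_neq0 F); rewrite mulr1 => h.
by apply/eqP; rewrite -(inj_eq (addrI (v 1))) addr0 -h.
Qed.

Lemma vV x : x != 0 -> v x^-1 = - v x.
Proof.
move=> x0; have := vM x0 (invr_neq0 x0); rewrite divff // v1 => h.
lia.
Qed.

Lemma vN1 : v (-1) = 0.
Proof.
have n1 : (-1 : F) != 0 by rewrite oppr_eq0 oner_neq0.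
have := vM n1 n1; rewrite mulrNN mulr1 v1 => h.
lia.
Qed.

Lemma vN x : x != 0 -> v (- x) = v x.
Proof.
move=> x0; have n1 : (-1 : F) != 0 by rewrite oppr_eq0 oner_neq0.
by rewrite -mulN1r vM // vN1 add0r.
Qed.

Lemma vgeD k x y : vge v k x -> vge v k y -> vge v k (x + y).
Proof.
rewrite /vge; have [->|x0] := eqVneq x 0; first by rewrite add0r.
have [->|y0] := eqVneq y 0; first by rewrite addr0 /= => ->; rewrite orbT.
have [->//|s0] := eqVneq (x + y) 0 => /= hx hy.
by move: hv => [_ H _]; apply: H.
Qed.

Lemma vgeN k x : vge v k x -> vge v k (- x).
Proof.
rewrite /vge oppr_eq0; have [//|x0] := eqVneq x 0.
by rewrite vN.
Qed.

Lemma vgeM k l x y : vge v k x -> vge v l y -> vge v (k + l) (x * y).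
Proof.
rewrite /vge mulf_eq0; have [//|x0] := eqVneq x 0.
have [//|y0] := eqVneq y 0 => /= hx hy.
by rewrite vM // lerD.
Qed.

Lemma vge_le k l x : k <= l -> vge v l x -> vge v k x.
Proof. by rewrite /vge => kl /orP[->//|h]; rewrite (le_trans kl h) orbT. Qed.

Lemma inR0 : inR v 0. Proof. by rewrite /inR /vge eqxx. Qed.
Lemma inR1 : inR v 1. Proof. by rewrite /inR /vge v1 lexx orbT. Qed.
Lemma inRD x y : inR v x -> inR v y -> inR v (x + y). Proof. exact: vgeD. Qed.
Lemma inRN x : inR v x -> inR v (- x). Proof. exact: vgeN. Qed.
Lemma inRB x y : inR v x -> inR v y -> inR v (x - y).
Proof. by move=> hx hy; apply: inRD => //; apply: inRN. Qed.
Lemma inRM x y : inR v x -> inR v y -> inR v (x * y).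
Proof. by move=> hx hy; have := vgeM hx hy; rewrite addr0. Qed.
Lemma inR_nat k : inR v k%:R.
Proof. elim: k => [|k ih]; first exact: inR0. by rewrite mulrS; apply: inRD => //; apply: inR1. Qed.
Lemma inR_sum I (r : seq I) (P : pred I) (f : I -> F) :
  (forall i, P i -> inR v (f i)) -> inR v (\sum_(i <- r | P i) f i).
Proof. by move=> h; apply: (big_ind (fun x => inR v x)) => //; [apply: inR0 | apply: inRD]. Qed.

Lemma mxR_mul a b c (A : 'M[F]_(a, b)) (B : 'M[F]_(b, c)) :
  mxR v A -> mxR v B -> mxR v (A *m B).
Proof.
move=> hA hB i j; rewrite mxE; apply: inR_sum => k _; exact: inRM.
Qed.
Lemma mxR_tr a b (A : 'M[F]_(a, b)) : mxR v A -> mxR v A^T.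
Proof. by move=> h i j; rewrite mxE. Qed.
Lemma mxR_add a b (A B : 'M[F]_(a, b)) : mxR v A -> mxR v B -> mxR v (A + B).
Proof. by move=> hA hB i j; rewrite mxE; apply: inRD. Qed.
Lemma mxR_opp a b (A : 'M[F]_(a, b)) : mxR v A -> mxR v (- A).
Proof. by move=> hA i j; rewrite mxE; apply: inRN. Qed.
Lemma mxR_scale a b r (A : 'M[F]_(a, b)) : inR v r -> mxR v A -> mxR v (r *: A).
Proof. by move=> hr hA i j; rewrite mxE; apply: inRM. Qed.
Lemma mxR_row_mx a b c (A : 'M[F]_(a, b)) (B : 'M[F]_(a, c)) :
  mxR v A -> mxR v B -> mxR v (row_mx A B).
Proof.
move=> hA hB i j; rewrite -(splitK j); case: (split j) => k /=.
  by rewrite row_mxEl. by rewrite row_mxEr.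
Qed.
Lemma mxR_col_mx a b c (A : 'M[F]_(a, c)) (B : 'M[F]_(b, c)) :
  mxR v A -> mxR v B -> mxR v (col_mx A B).
Proof.
move=> hA hB i j; rewrite -(splitK i); case: (split i) => k /=.
  by rewrite col_mxEu. by rewrite col_mxEd.
Qed.
Lemma mxR0 a b : mxR v (0 : 'M[F]_(a, b)).
Proof. by move=> i j; rewrite mxE; apply: inR0. Qed.


Lemma ds_rinv a b (X : 'M[F]_(a, b)) (Y : 'M[F]_(b, a)) :
  mxR v X -> mxR v Y -> X *m Y = 1%:M ->
  direct_summand v (fun y => exists2 z : 'rV_a, mxR v z & y = z *m X).
Proof.
move=> hX hY XY.
exists (fun w : 'rV_b => mxR v w /\ w *m Y = 0); split.
- split.
  + by move=> t [].
  + by split; [apply: mxR0 | rewrite mul0mx].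
  + move=> p q [hp ep] [hq eq]; split; first exact: mxR_add.
    by rewrite mulmxDl ep eq addr0.
  + move=> r p hr [hp ep]; split; first exact: mxR_scale.
    by rewrite -scalemxAl ep scaler0.
- move=> y hy; exists (y *m Y *m X), (y - y *m Y *m X); split.
  + by exists (y *m Y) => //; apply: mxR_mul.
  + split; first by apply: mxR_add => //; apply: mxR_opp; apply: mxR_mul => //; apply: mxR_mul.
    by rewrite mulmxBl -[y *m Y *m X *m Y]mulmxA XY mulmx1 subrr.
  + by rewrite addrC subrK.
- move=> z [w hw ->] [_ e].
  by move: e; rewrite -mulmxA XY mulmx1 => ->; rewrite mul0mx.
Qed.

Lemma unit_coord n (x : 'rV[F]_n) : primitive_vec v x ->
  exists j, x 0 j != 0 /\ inR v (x 0 j)^-1.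
Proof.
case=> hx x0 [N [[NR N0 ND NZ] dec int0]].
case: (boolP [exists j, (x 0 j != 0) && inR v (x 0 j)^-1]).
  by move=> /existsP[j /andP[h1 h2]]; exists j.
move=> /existsP nh; exfalso.
have all1 : forall j, vge v 1 (x 0 j).
  move=> j; rewrite /vge; have [//|xj0] := eqVneq (x 0 j) 0.
  have : ~~ inR v (x 0 j)^-1 by apply/negP => h; apply: nh; exists j; rewrite xj0.
  rewrite /inR /vge invr_eq0 (negbTE xj0) /= vV // -ltNge oppr_lt0 /=.
  by [].
move: hv => [_ _ [pi [pi0 vpi]]].
set x2 := pi^-1 *: x.
have hx2 : mxR v x2.
  move=> i j; rewrite mxE /inR /vge mulf_eq0 invr_eq0 (negbTE pi0) /=.
  have := all1 j; rewrite /vge ord1; have [->|xj0] := eqVneq (x 0 j) 0; first by [].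
  rewrite /= vM ?invr_eq0 // vV // vpi => h. lia.
have [s [t [[r hr ->] Nt e]]] := dec _ hx2.
set e1 := 1 - r * pi.
have xe : x = pi *: x2 by rewrite /x2 scalerA divff // scale1r.
have he1 : t = e1 *: x2.
  have -> : t = x2 - r *: x by rewrite e addrC addKr.
  by rewrite [in r *: x]xe scalerA /e1 scalerBl scale1r.
have piR : vge v 1 pi by rewrite /vge vpi lexx orbT.
have ne1 : ~~ vge v 1 e1.
  apply/negP => h1.
  have : vge v 1 (e1 + r * pi).
    apply: vgeD => //; rewrite -[1]add0r; exact: vgeM.
  by rewrite /e1 subrK /vge oner_eq0 v1.
have e10 : e1 != 0 by apply: contraNneq ne1 => ->; rewrite /vge eqxx.
have iR : inR v e1^-1.
  move: ne1; rewrite /inR /vge invr_eq0 (negbTE e10) /= vV // => h; lia.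
have Nx2 : N x2 by rewrite -[x2]scale1r -(mulVf e10) -scalerA -he1; apply: NZ.
have Nx : N x by rewrite xe; apply: NZ => //; exact: vge_le piR.
apply/negP: x0; rewrite negbK; apply/eqP; apply: int0 Nx.
by exists 1; [exact: inR1 | rewrite scale1r].
Qed.

End Val.
Section Hyp.
Variable F : fieldType.

Lemma dbl_lt k (t : 'I_k) : (2 * t < 2 * k)%N.
Proof. have := ltn_ord t; lia. Qed.
Lemma dbl1_lt k (t : 'I_k) : ((2 * t).+1 < 2 * k)%N.
Proof. have := ltn_ord t; lia. Qed.
Definition dbl k (t : 'I_k) : 'I_(2 * k) := Ordinal (dbl_lt t).
Definition dbl1 k (t : 'I_k) : 'I_(2 * k) := Ordinal (dbl1_lt t).

Lemma val_dbl k (t : 'I_k) : nat_of_ord (dbl t) = (2 * t)%N. Proof. by []. Qed.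
Lemma val_dbl1 k (t : 'I_k) : nat_of_ord (dbl1 t) = (2 * t).+1. Proof. by []. Qed.

Lemma sum_nat_split k (h : nat -> F) :
  \sum_(0 <= p < 2 * k) h p = \sum_(0 <= t < k) (h (2 * t)%N + h (2 * t).+1).
Proof.
elim: k => [|k ih]; first by rewrite muln0 !big_geq.
have -> : (2 * k.+1 = (2 * k).+2)%N by rewrite mulnS add2n.
by rewrite big_nat_recr // big_nat_recr // [in RHS]big_nat_recr //= ih addrA.
Qed.

Lemma split_ord k (G : 'I_(2 * k) -> F) :
  \sum_(p < 2 * k) G p = \sum_(t < k) (G (dbl t) + G (dbl1 t)).
Proof.
pose h (p : nat) := if insub p is Some q then G q else 0.
transitivity (\sum_(p < 2 * k) h p).
  by apply: eq_bigr => p _; rewrite /h valK.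
rewrite -(big_mkord xpredT h) sum_nat_split big_mkord.
apply: eq_bigr => t _.
have -> : (2 * t)%N = val (dbl t) by [].
have -> : (2 * t).+1 = val (dbl1 t) by [].
by rewrite /h !valK.
Qed.

Lemma half_d t : ((2 * t)./2 = t)%N.
Proof. by rewrite mul2n doubleK. Qed.
Lemma half_d1 t : (((2 * t).+1)./2 = t)%N.
Proof. by rewrite mul2n /= uphalf_double. Qed.

Lemma Hdd k (u t : 'I_k) : hyp_gram F k (dbl u) (dbl t) = 0.
Proof. by rewrite mxE ?val_dbl ?val_dbl1 !half_d; case: eqP => // ->; rewrite eqxx. Qed.
Lemma Hd1d1 k (u t : 'I_k) : hyp_gram F k (dbl1 u) (dbl1 t) = 0.
Proof. by rewrite mxE ?val_dbl ?val_dbl1 !half_d1; case: eqP => // ->; rewrite eqxx. Qed.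
Lemma Hd1d k (u t : 'I_k) : hyp_gram F k (dbl1 u) (dbl t) = (u == t)%:R.
Proof.
rewrite mxE ?val_dbl ?val_dbl1 half_d1 half_d.
have -> : ((2 * u).+1 != 2 * t)%N.
  apply/eqP => h; have := congr1 odd h; rewrite /= !mul2n !odd_double //.
by rewrite andbT val_eqE; case: (u == t).
Qed.
Lemma Hdd1 k (u t : 'I_k) : hyp_gram F k (dbl u) (dbl1 t) = (u == t)%:R.
Proof.
rewrite mxE ?val_dbl ?val_dbl1 half_d1 half_d.
have -> : (2 * u != (2 * t).+1)%N.
  apply/eqP => h; have := congr1 odd h; rewrite /= !mul2n !odd_double //.
by rewrite andbT val_eqE; case: (u == t).
Qed.

Lemma sum_dr n (f : 'I_n -> F) t : \sum_(u < n) f u * (u == t)%:R = f t.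
Proof.
rewrite (bigD1 t) //= eqxx mulr1 big1 ?addr0 // => u /negbTE ->; exact: mulr0.
Qed.
Lemma sum_dl n (f : 'I_n -> F) t : \sum_(u < n) (t == u)%:R * f u = f t.
Proof.
rewrite (bigD1 t) //= eqxx mul1r big1 ?addr0 // => u; rewrite eq_sym => /negbTE ->; exact: mul0r.
Qed.

Lemma hyp_form a b k (M : 'M[F]_(a, 2 * k)) (N : 'M[F]_(b, 2 * k)) i j :
  (M *m hyp_gram F k *m N^T) i j =
  \sum_(t < k) (M i (dbl t) * N j (dbl1 t) + M i (dbl1 t) * N j (dbl t)).
Proof.
have MH : forall t, (M *m hyp_gram F k) i (dbl t) = M i (dbl1 t).
  move=> t; rewrite mxE split_ord.
  under eq_bigr do rewrite Hdd Hd1d mulr0 add0r.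
  exact: sum_dr.
have MH1 : forall t, (M *m hyp_gram F k) i (dbl1 t) = M i (dbl t).
  move=> t; rewrite mxE split_ord.
  under eq_bigr do rewrite Hd1d1 Hdd1 mulr0 addr0.
  exact: sum_dr.
rewrite mxE split_ord; apply: eq_bigr => t _.
by rewrite [N^T _ _]mxE [N^T _ _]mxE MH MH1 addrC.
Qed.

End Hyp.

Lemma odd2 t : odd (2 * t) = false. Proof. by rewrite mul2n odd_double. Qed.
Lemma odd2S t : odd (2 * t).+1 = true. Proof. by rewrite /= odd2. Qed.

Lemma sum_dn (F : fieldType) k (i : nat) (f : nat -> F) :
  \sum_(t < k) (i == t :> nat)%:R * f t = if (i < k)%N then f i else 0.
Proof.
case: ltnP => h.
  exact: (sum_dl (fun t : 'I_k => f t) (Ordinal h)).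
rewrite big1 // => t _; have : (i != t)%N by apply/eqP => e; move: h; rewrite e leqNgt ltn_ord.
by move/negbTE => ->; rewrite mul0r.
Qed.

Lemma sum_dn' (F : fieldType) k (i : nat) (f : nat -> F) :
  \sum_(t < k) f t * (i == t :> nat)%:R = if (i < k)%N then f i else 0.
Proof. by rewrite -sum_dn; apply: eq_bigr => t _; rewrite mulrC. Qed.

Section Core.
Variables (F : fieldType) (v : F -> int).
Hypothesis hv : is_dvaluation v.

Lemma core n' m (A : 'M[F]_(n'.+1)) (C : 'M[F]_m) (y : 'rV_m) (d : 'cV_m) :
  A^T = A -> mxR v A -> (forall i, inR v (A i i / 2%:R)) -> (2%:R : F) != 0 ->
  mxR v y -> mxR v d -> y *m d = 1%:M -> Qf C y = A 0 0 ->
  exists (X : 'M[F]_(n'.+1, 2 * n' + m)) (Y : 'M[F]_(2 * n' + m, n'.+1)),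
    [/\ mxR v X, mxR v Y, X *m block_mx (hyp_gram F n') 0 0 C *m X^T = A
      & X *m Y = 1%:M].
Proof.
move=> hsym hA hev two0 hy hd yd hq.
have sym : forall i j, A i j = A j i by move=> i j; rewrite -[in LHS]hsym mxE.
pose s (i j : nat) := A (inord i) (inord j).
have sE : forall i j (hi : (i < n'.+1)%N) (hj : (j < n'.+1)%N), s i j = A (Ordinal hi) (Ordinal hj).
  move=> i j hi hj; rewrite /s.
  have -> : inord i = Ordinal hi by apply: val_inj; rewrite /= inordK.
  by have -> : inord j = Ordinal hj by apply: val_inj; rewrite /= inordK.
have sR : forall i j, inR v (s i j) by move=> i j; apply: hA.
pose a (i k : nat) := if (i < k)%N then s i.+1 k.+1 else if i == k then s i.+1 i.+1 / 2%:R else 0.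
pose cf (i k : nat) := if i is i'.+1 then a i' k else s 0%N k.+1.
have aR : forall i k, inR v (a i k).
  move=> i k; rewrite /a; case: ifP => // _; case: ifP => _; last exact: inR0.
  exact: hev.
have cfR : forall i k, inR v (cf i k) by move=> [|i] k //=.
pose XL : 'M[F]_(n'.+1, 2 * n') :=
  \matrix_(i, p) (if odd p then cf i p./2 else (i == (p./2).+1 :> nat)%:R).
pose E0 : 'cV[F]_(n'.+1) := \col_i ((i : nat) == 0%N)%:R.
pose X := row_mx XL (E0 *m y).
pose YU : 'M[F]_(2 * n', n'.+1) :=
  \matrix_(p, j) (if odd p then 0 else (j == (p./2).+1 :> nat)%:R).
pose Y := col_mx YU (d *m E0^T).
have XLd : forall i t, XL i (dbl t) = (i == t.+1 :> nat)%:R.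
  by move=> i t; rewrite mxE val_dbl odd2 half_d.
have XLd1 : forall i t, XL i (dbl1 t) = cf i t.
  by move=> i t; rewrite mxE val_dbl1 odd2S half_d1.
have YUd : forall t j, YU (dbl t) j = (j == t.+1 :> nat)%:R.
  by move=> t j; rewrite mxE val_dbl odd2 half_d.
have YUd1 : forall t j, YU (dbl1 t) j = 0.
  by move=> t j; rewrite mxE val_dbl1 odd2S.
have E0R : mxR v E0 by move=> i j; rewrite mxE; apply: inR_nat.
have E0E : forall i j, (E0 *m E0^T) i j = ((i : nat) == 0%N)%:R * ((j : nat) == 0%N)%:R.
  by move=> i j; rewrite mxE big_ord1 !mxE.
exists X, Y; split.
- apply: mxR_row_mx; last by apply: mxR_mul.
  move=> i j; rewrite mxE; case: ifP => _ //; exact: inR_nat.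
- apply: mxR_col_mx; last by apply: mxR_mul => //; apply: mxR_tr.
  move=> i j; rewrite mxE; case: ifP => _; [exact: inR0 | exact: inR_nat].
- rewrite /X mul_row_block !mulmx0 addr0 add0r tr_row_mx mul_row_col.
  have e : y *m C *m y^T = (Qf C y)%:M by rewrite /Qf {1}[y *m C *m y^T]mx11_scalar.
  have -> : E0 *m y *m C *m (E0 *m y)^T = Qf C y *: (E0 *m E0^T).
    rewrite trmx_mul.
    have -> : E0 *m y *m C *m (y^T *m E0^T) = E0 *m (y *m C *m y^T) *m E0^T by rewrite !mulmxA.
    by rewrite e mul_mx_scalar -scalemxAl.
  have ssym : forall i j, s i j = s j i by move=> i j; rewrite /s sym.
  have A00 : A 0 0 = s 0%N 0%N by rewrite (sE 0%N 0%N (ltn0Sn n') (ltn0Sn n')).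
  apply/matrixP => i j; rewrite mxE hyp_form mxE E0E hq A00.
  under eq_bigr do rewrite XLd XLd1 XLd XLd1.
  case: i => [[|i] hi]; case: j => [[|j] hj]; rewrite -sE /=.
  + by rewrite big1 ?add0r ?mulr1 // => t _; rewrite mul0r mulr0 addr0.
  + under eq_bigr do rewrite mul0r add0r eqSS.
    by rewrite (sum_dn' _ _ (fun t => s 0%N t.+1)) -ltnS hj mulr0 mulr0 addr0.
  + under eq_bigr do rewrite mulr0 addr0 eqSS.
    by rewrite (sum_dn _ _ (fun t => s 0%N t.+1)) -ltnS hi mul0r mulr0 addr0 ssym.
  + under eq_bigr do rewrite !eqSS.
    rewrite mul0r mulr0 addr0 big_split /=.
    rewrite (sum_dn _ _ (fun t => a j t)) (sum_dn' _ _ (fun t => a i t)).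
    have hi' : (i < n')%N by rewrite -ltnS.
    have hj' : (j < n')%N by rewrite -ltnS.
    rewrite hi' hj' /a.
    case: (ltngtP i j) => [ij|ij|->].
    * by rewrite add0r.
    * by rewrite addr0 ssym.
    * by rewrite -mulrDl -mulr2n -[_ *+ 2]mulr_natr mulfK.
- rewrite /X /Y mul_row_col.
  have -> : E0 *m y *m (d *m E0^T) = E0 *m E0^T by rewrite mulmxA -(mulmxA E0) yd mulmx1.
  apply/matrixP => i j; rewrite mxE E0E mxE split_ord.
  under eq_bigr do rewrite XLd XLd1 YUd YUd1 mulr0 addr0.
  rewrite !mxE -val_eqE.
  case: i => [[|i] hi] /=.
    by rewrite big1 ?add0r ?mul1r; [rewrite eq_sym | move=> t _; rewrite mul0r].
  under eq_bigr do rewrite eqSS.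
  by rewrite (sum_dn _ _ (fun t => (j == t.+1 :> nat)%:R)) mul0r addr0 -ltnS hi eq_sym.
Qed.

End Core.

Lemma quadE (F : fieldType) a b c (M : 'M[F]_(a, b)) (G : 'M[F]_b) (N : 'M[F]_(c, b)) i j :
  (M *m G *m N^T) i j = (row i M *m G *m (row j N)^T) 0 0.
Proof.
rewrite -[in RHS]row_mul !mxE; apply: eq_bigr => k _; rewrite !mxE.
by congr (_ * _); rewrite -row_mul mxE.
Qed.

Section Main.
Variables (F : fieldType) (v : F -> int).
Hypothesis hv : is_dvaluation v.

Lemma mxR_perm n (s : 'S_n) : mxR v (perm_mx s : 'M[F]_n).
Proof. by move=> i j; rewrite !mxE; apply: inR_nat. Qed.

Lemma first_unit n' (w : 'rV[F]_(n'.+1)) :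
  mxR v w -> w 0 ord0 != 0 -> inR v (w 0 ord0)^-1 ->
  exists P Pi : 'M[F]_(n'.+1), [/\ mxR v P, mxR v Pi, Pi *m P = 1%:M & row 0 P = w].
Proof.
move=> wR w00 uR.
pose P0 : 'M[F]_(n'.+1) := \matrix_(i, l) if i == ord0 then w 0 l else (i == l)%:R.
pose P0i : 'M[F]_(n'.+1) := \matrix_(i, l)
  if i == ord0 then (if l == ord0 then (w 0 ord0)^-1 else - (w 0 ord0)^-1 * w 0 l)
  else (i == l)%:R.
exists P0, P0i; split.
- move=> i l; rewrite mxE; case: ifP => _; [exact: wR | exact: inR_nat].
- move=> i l; rewrite mxE; case: ifP => _; last exact: inR_nat.
  case: ifP => _ //. have := inRM hv (inRN hv uR) (wR ord0 l). done.
- apply/matrixP => i l; rewrite !mxE.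
  have [->|i0] := eqVneq i ord0.
    rewrite (bigD1 ord0) //= !mxE !eqxx.
    have [->|l0] := eqVneq l ord0.
      rewrite big1 ?addr0 ?mulVf // => r r0; rewrite !mxE (negbTE r0).
      by rewrite eq_sym (negbTE r0) mulr0.
    rewrite (bigD1 l) //= !mxE (negbTE l0) eqxx big1 ?addr0.
      by rewrite eqxx mulr1 mulNr subrr.
    move=> r /andP[r0 rl]; rewrite !mxE (negbTE r0) (negbTE rl); exact: mulr0.
  under eq_bigr do rewrite !mxE (negbTE i0).
  by rewrite (sum_dl (fun r => if r == ord0 then w 0 l else (r == l)%:R)) (negbTE i0).
- by apply/rowP => l; rewrite !mxE eqxx.
Qed.

Lemma basis_change n' (x : 'rV[F]_(n'.+1)) :
  mxR v x -> (exists j, x 0 j != 0 /\ inR v (x 0 j)^-1) ->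
  exists P Pi : 'M[F]_(n'.+1), [/\ mxR v P, mxR v Pi, Pi *m P = 1%:M & row 0 P = x].
Proof.
move=> hx [j [xj0 xjR]].
pose s := tperm (ord0 : 'I_n'.+1) j.
have w0 : (x *m perm_mx s^-1) 0 ord0 = x 0 j by rewrite -col_permE mxE tpermL.
have wR : mxR v (x *m perm_mx s^-1) by apply: mxR_mul => //; apply: mxR_perm.
have [P0 [P0i [P0R P0iR P0iP0 rP0]]] := first_unit wR (ltac:(by rewrite w0)) (ltac:(by rewrite w0)).
exists (P0 *m perm_mx s), (perm_mx s^-1 *m P0i); split.
- by apply: mxR_mul => //; apply: mxR_perm.
- by apply: mxR_mul => //; apply: mxR_perm.
- by rewrite mulmxA -(mulmxA (perm_mx s^-1)) P0iP0 mulmx1 -perm_mxM mulVg perm_mx1.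
- by rewrite row_mul rP0 -mulmxA -perm_mxM mulVg perm_mx1 mulmx1.
Qed.

End Main.

Theorem lemma6p6 (F : fieldType) (v : F -> int) (n m : nat)
    (A : 'M[F]_n) (C : 'M[F]_m) :
  local_field v -> (2%:R : F) != 0 -> prime_elem v 2%:R ->
  (1 <= n)%N -> lattice v A -> even v A -> lattice v C ->
  (exists q : F, Qstar v A q /\ Qstar v C q) ->
  exists X : 'M[F]_(n, 2 * (n - 1) + m),
    prim_rep v A (block_mx (hyp_gram F (n - 1)) 0 0 C) X.
Proof.
move=> [hv _ _] two0 _ hn [hsym hA _] hev _ [q [[x [px qx]] [y [py qy]]]].
case: n hn A hsym hA hev x px qx => [//|n'] _ A hsym hA hev x px qx.
have -> : (n'.+1 - 1 = n')%N by rewrite subn1.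
have [k [yk0 ykR]] := unit_coord hv py.
have yR : mxR v y by case: py.
have xR : mxR v x by case: px.
pose d : 'cV[F]_m := (y 0 k)^-1 *: delta_mx k 0.
have dR : mxR v d.
  by move=> i j; rewrite !mxE; apply: (inRM hv) => //; apply: (inR_nat hv).
have yd : y *m d = 1%:M.
  apply/matrixP => i j; rewrite !ord1 -scalemxAr -colE !mxE eqxx mulVf //.
have [P [Pi [PR PiR PiP rP]]] := basis_change hv xR (unit_coord hv px).
pose A' := P *m A *m P^T.
have hsym' : A'^T = A' by rewrite /A' !trmx_mul trmxK hsym mulmxA.
have hA' : mxR v A'.
  by apply: (mxR_mul hv); [apply: (mxR_mul hv) | apply: mxR_tr].
have hev' : forall i, inR v (A' i i / 2%:R).
  move=> i; rewrite /A' quadE; apply: hev.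
  by move=> a b; rewrite mxE.
have hq : Qf C y = A' 0 0 by rewrite /A' quadE rP -qy qx.
have [X' [Y' [X'R Y'R X'G X'Y]]] := core hv hsym' hA' hev' two0 yR dR yd hq.
exists (Pi *m X'); split.
- exact: (mxR_mul hv).
- rewrite trmx_mul.
  have -> : Pi *m X' *m block_mx (hyp_gram F n') 0 0 C *m (X'^T *m Pi^T) =
    Pi *m (X' *m block_mx (hyp_gram F n') 0 0 C *m X'^T) *m Pi^T by rewrite !mulmxA.
  rewrite X'G /A' !mulmxA PiP mul1mx.
  by rewrite -mulmxA -trmx_mul PiP trmx1 mulmx1.
- apply: (ds_rinv hv (Y := Y' *m P)); first exact: (mxR_mul hv).
    exact: (mxR_mul hv).
  by rewrite -mulmxA (mulmxA X') X'Y mul1mx PiP.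
Qed.
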